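(* Let $\mathcal{N}$ be an acyclic, deterministic, sound negotiation, and let $m,n$ be two nodes of $\mathcal{N}$. Then $m\parallel n$ if and only if every run $w$ from $C_{\mathit{init}}$ containing both $m$ and $n$ has an equivalent run $w'=w_1w_2$ with $C_{\mathit{init}}\xrightarrow{w_1}C\xrightarrow{w_2}C'$ for some configuration $C$ in which both $m$ and $n$ are enabled.
   Context: A negotiation is a tuple $\mathcal{N}=(\mathit{Proc},N,\mathit{dom},R,\delta)$ where $\mathit{Proc}$ is a finite set of processes, $N$ is a finite set of nodes, $\mathit{dom}:N\to 2^{\mathit{Proc}}\setminus\{\emptyset\}$, there are two distinguished nodes $n_{\mathit{init}},n_{\mathit{fin}}$ with $\mathit{dom}(n_{\mathit{init}})=\mathit{dom}(n_{\mathit{fin}})=\mathit{Proc}$, $R$ is a set of results, each node $n$ has a set $\mathit{out}(n)\subseteq R$ of results (nonempty for $n\neq n_{\mathit{fin}}$), and $\delta(n,a,p)\subseteq N$ is defined and nonempty exactly when $a\in\mathit{out}(n)$ and $p\in\mathit{dom}(n)$, with $p\in\mathit{dom}(n')$ for all $n'\in\delta(n,a,p)$. $\mathcal{N}$ is deterministic if every $\delta(n,a,p)$ is a singleton. A configuration is a map $C$ assigning to each process a nonempty set of nodes; $C_{\mathit{init}}(p)=\{n_{\mathit{init}}\}$, $C_{\mathit{fin}}(p)=\{n_{\mathit{fin}}\}$. A node $n$ is enabled in $C$ if $n\in C(p)$ for all $p\in\mathit{dom}(n)$. If $n$ is enabled and $a\in\mathit{out}(n)$ then $C\xrightarrow{(n,a)}C'$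 with $C'(p)=\delta(n,a,p)$ for $p\in\mathit{dom}(n)$, $C'(p)=C(p)$ otherwise. A run is a sequence $(n_1,a_1)(n_2,a_2)\cdots$ of such steps, and it contains a node $n$ if $n=n_i$ for some $i$; a configuration is reachable if some finite run from $C_{\mathit{init}}$ leads to it; $\mathcal{N}$ is sound if every finite run from $C_{\mathit{init}}$ can be extended to a finite run ending in $C_{\mathit{fin}}$. The graph of $\mathcal{N}$ has vertex set $N$ and edges $n\to n'$ whenever $n'\in\delta(n,a,p)$ for some $a,p$; $\mathcal{N}$ is acyclic if this graph is. Two runs are equivalent if one can be obtained from the other by repeatedly exchanging adjacent pairs $(m,a)(n,b)$ into $(n,b)(m,a)$ when $\mathit{dom}(m)\cap\mathit{dom}(n)=\emptyset$. Two nodes satisfy $m\parallel n$ (can be concurrently enabled) if $\mathit{dom}(m)\cap\mathit{dom}(n)=\emptyset$ and some reachable configuration enables both $m$ and $n$. *)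

(* Defs.v *)
From Stdlib Require Import Relation_Operators.
From mathcomp Require Import all_boot.

Set Implicit Arguments.
Unset Strict Implicit.
Unset Printing Implicit Defensive.

Record negotiation (Proc Node Res : finType) := Negotiation {
  dom   : Node -> {set Proc};
  n_init : Node;
  n_fin  : Node;
  out   : Node -> {set Res};
  delta : Node -> Res -> Proc -> {set Node}
}.

Section Negotiations.
Variables (Proc Node Res : finType) (N : negotiation Proc Node Res).

Definition wf_negotiation : Prop :=
  [/\ (forall n, dom N n != set0),
      dom N (n_init N) = [set: Proc] /\ dom N (n_fin N) = [set: Proc],
      out N (n_fin N) = set0,
      (forall n, n != n_fin N -> out N n != set0) &
      (forall n a p, a \in out N n -> p \in dom N n ->
         delta N n a p != set0 /\
         (forall n', n' \in delta N n a p -> p \in dom N n'))].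

Definition deterministic : Prop :=
  forall n a p, a \in out N n -> p \in dom N n ->
    exists n', delta N n a p = [set n'].

Definition config := {ffun Proc -> {set Node}}.

Definition C_init : config := [ffun _ => [set n_init N]].
Definition C_fin : config := [ffun _ => [set n_fin N]].

Definition enabled (C : config) (n : Node) : Prop :=
  forall p, p \in dom N n -> n \in C p.

Definition step (C : config) (na : Node * Res) (C' : config) : Prop :=
  let (n, a) := na in
  [/\ enabled C n, a \in out N n &
      forall p, C' p = if p \in dom N n then delta N n a p else C p].

Fixpoint run (C : config) (w : seq (Node * Res)) (C' : config) : Prop :=
  match w with
  | [::] => C = C'
  | x :: w' => exists C1, step C x C1 /\ run C1 w' C'
  end.

Definition reachable (C : config) : Prop := exists w, run C_init w C.

Definition contains (w : seq (Node * Res)) (n : Node) : Prop :=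
  n \in [seq x.1 | x <- w].

Definition sound : Prop :=
  forall w C, run C_init w C -> exists w', run C w' C_fin.

Definition edge (n n' : Node) : Prop :=
  exists a p, a \in out N n /\ p \in dom N n /\ n' \in delta N n a p.

Definition acyclic : Prop := forall n, ~ clos_trans Node edge n n.

Definition swap1 (w w' : seq (Node * Res)) : Prop :=
  exists u v m a n b,
    [disjoint dom N m & dom N n] /\
    w = u ++ (m, a) :: (n, b) :: v /\ w' = u ++ (n, b) :: (m, a) :: v.

Definition equiv_runs : seq (Node * Res) -> seq (Node * Res) -> Prop :=
  clos_refl_trans (seq (Node * Res)) swap1.

Definition concurrent (m n : Node) : Prop :=
  [disjoint dom N m & dom N n] /\
  exists C, reachable C /\ enabled C m /\ enabled C n.

End Negotiations.

(* Main.v *)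
Require Import Defs.
From Stdlib Require Import Relation_Operators.
From mathcomp Require Import all_boot.
Set Implicit Arguments.
Unset Strict Implicit.
Unset Printing Implicit Defensive.

Lemma disjI (T : finType) (A B : {set T}) :
  (forall p, p \in A -> p \in B -> False) -> [disjoint A & B].
Proof.
move=> H; rewrite disjoint_subset; apply/subsetP => p pA.
rewrite !inE; apply/negP => pB; exact: H p pA pB.
Qed.

Lemma run_cat (P Nd R : finType) (N : negotiation P Nd R) s t C C' :
  run N C (s ++ t) C' <-> exists C1, run N C s C1 /\ run N C1 t C'.
Proof.
elim: s C => [|x s IH] C /=.
  by split; [move=> H; exists C | move=> [C1 [-> H]]].
split.
  move=> [C1 [Hs /IH [C2 [H1 H2]]]]; exists C2; split=> //; by exists C1.
move=> [C2 [[C1 [Hs H1]] H2]]; exists C1; split=> //; apply/IH; by exists C2.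
Qed.

Lemma step_fun (P Nd R : finType) (N : negotiation P Nd R) C x C1 C2 :
  step N C x C1 -> step N C x C2 -> C1 = C2.
Proof.
case: x => n a [_ _ H1] [_ _ H2]; apply/ffunP => p; by rewrite H1 H2.
Qed.

Lemma step_exists (P Nd R : finType) (N : negotiation P Nd R) C n a :
  enabled N C n -> a \in out N n -> exists C', step N C (n, a) C'.
Proof.
move=> He Ha.
exists [ffun p => if p \in dom N n then delta N n a p else C p].
by split=> // p; rewrite ffunE.
Qed.

Lemma swap_step (P Nd R : finType) (N : negotiation P Nd R) C x a y b C1 C2 :
  [disjoint dom N x & dom N y] ->
  step N C (x, a) C1 -> step N C1 (y, b) C2 ->
  exists C1', step N C (y, b) C1' /\ step N C1' (x, a) C2.
Proof.
move=> Hd [Hex Ha H1] [Hey Hb H2].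
have nxy p : p \in dom N x -> p \in dom N y -> False.
  by move=> px; rewrite (disjointFr Hd px).
have Hey' : enabled N C y.
  move=> p py; have := Hey p py; rewrite H1; case: ifP => // px.
  by case: (nxy p px py).
have [C1' HC1'] := step_exists Hey' Hb.
exists C1'; split=> //.
case: HC1' => _ _ H1'.
split=> //.
- move=> p px; rewrite H1'; case: ifP => [py|_]; first by case: (nxy p px py).
  exact: Hex.
- move=> p; rewrite H2 H1 H1'.
  case: ifP => py; case: ifP => px //.
  by case: (nxy p px py).
Qed.

Lemma swap1_run (P Nd R : finType) (N : negotiation P Nd R) w w' C C' :
  swap1 N w w' -> run N C w C' -> run N C w' C'.
Proof.
move=> [u [v [m [a [n [b [Hd [-> ->]]]]]]]].
move/run_cat=> [C1 [Hu /= [C2 [S1 [C3 [S2 Hv]]]]]].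
apply/run_cat; exists C1; split=> //.
have [C1' [T1 T2]] := swap_step Hd S1 S2.
exists C1'; split=> //; exists C3; split=> //.
Qed.

Lemma equiv_run (P Nd R : finType) (N : negotiation P Nd R) w w' C C' :
  equiv_runs N w w' -> run N C w C' -> run N C w' C'.
Proof.
move=> H; elim: H C' => //.
- move=> x y Hs C'; exact: swap1_run.
- move=> x y z _ IH1 _ IH2 C' Hr; exact/IH2/IH1.
Qed.

Lemma swap1_cat (P Nd R : finType) (N : negotiation P Nd R) p s t q :
  swap1 N s t -> swap1 N (p ++ s ++ q) (p ++ t ++ q).
Proof.
move=> [u [v [m [a [n [b [Hd [-> ->]]]]]]]].
exists (p ++ u), (v ++ q), m, a, n, b; split=> //.
by rewrite -!catA.
Qed.

Lemma equiv_cat (P Nd R : finType) (N : negotiation P Nd R) p s t q :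
  equiv_runs N s t -> equiv_runs N (p ++ s ++ q) (p ++ t ++ q).
Proof.
move=> H; elim: H => //.
- move=> x y Hs; apply: rt_step; exact: swap1_cat.
- move=> x; exact: rt_refl.
- move=> x y z _ IH1 _ IH2; exact: rt_trans IH1 IH2.
Qed.

Lemma unchanged (P Nd R : finType) (N : negotiation P Nd R) s C C' p :
  run N C s C' -> (forall y, y \in s -> p \notin dom N y.1) -> C' p = C p.
Proof.
elim: s C => [|[x a] s IH] C /=; first by move=> ->.
move=> [C1 [[_ _ H1] Hr]] Hn.
rewrite (IH C1 Hr); last by move=> y ys; apply: Hn; rewrite inE ys orbT.
rewrite H1; have := Hn (x, a); rewrite inE eqxx => /(_ isT) /= /negbTE -> //.
Qed.

Definition single (P Nd : finType) (C : {ffun P -> {set Nd}}) :=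
  forall p, exists x, C p = [set x].

Lemma single_init (P Nd R : finType) (N : negotiation P Nd R) :
  single (C_init N).
Proof. by move=> p; exists (n_init N); rewrite ffunE. Qed.

Lemma single_step (P Nd R : finType) (N : negotiation P Nd R) C x C' :
  deterministic N -> single C -> step N C x C' -> single C'.
Proof.
case: x => y a Hdet HS [He Ha H] p; rewrite H; case: ifP => // py.
exact: Hdet.
Qed.

Lemma single_run (P Nd R : finType) (N : negotiation P Nd R) C w C' :
  deterministic N -> single C -> run N C w C' -> single C'.
Proof.
move=> Hdet; elim: w C => [|x w IH] C /=; first by move=> ? <-.
move=> HS [C1 [Hs Hr]]; apply: (IH C1) => //; exact: single_step Hs.
Qed.

Lemma first_fire (P Nd R : finType) (N : negotiation P Nd R) v C C' q x :
  run N C v C' -> C q = [set x] -> C' q <> [set x] ->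
  exists v1 C2, run N C v1 C2 /\ enabled N C2 x.
Proof.
elim: v C => [|[y a] v IH] C /=; first by move=> -> ->.
move=> [C1 [[He Ha H] Hr]] Hq Hq'.
case py: (q \in dom N y).
  have := He q py; rewrite Hq inE => /eqP E.
  by exists [::], C; rewrite -E.
have [v1 [C2 [H1 H2]]] := IH C1 Hr ltac:(by rewrite H py) Hq'.
exists ((y, a) :: v1), C2; split=> //=; exists C1; split=> //.
Qed.

Definition after (P Nd R : finType) (N : negotiation P Nd R) (n : Nd) (C : {ffun P -> {set Nd}}) :=
  forall p, p \in dom N n -> forall x, x \in C p -> clos_trans Nd (edge N) n x.

Lemma after_step (P Nd R : finType) (N : negotiation P Nd R) n C y C' :
  after N n C -> step N C y C' -> after N n C'.
Proof.
case: y => y a HA [He Ha H] p pn x; rewrite H; case: ifP => py; last exact: HA.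
move=> xd; apply: t_trans (HA p pn y (He p py)) _.
apply: t_step; by exists a, p.
Qed.

Lemma after_run (P Nd R : finType) (N : negotiation P Nd R) n C w C' :
  after N n C -> run N C w C' -> after N n C'.
Proof.
elim: w C => [|x w IH] C /=; first by move=> ? <-.
move=> HA [C1 [Hs Hr]]; apply: (IH C1) => //; exact: after_step Hs.
Qed.

Lemma path_lemma (P Nd R : finType) (N : negotiation P Nd R) n :
  wf_negotiation N -> deterministic N -> sound N ->
  forall x y, clos_trans Nd (edge N) x y ->
  forall w C q, run N (C_init N) w C -> after N n C -> C q = [set x] ->
  exists w' C' q', [/\ run N (C_init N) w' C', after N n C',
                      C' q' = [set y] & q' \in dom N y].
Proof.
move=> Hwf Hdet Hsound x y H; elim: H => {x y} [x y|x y z _ IH1 _ IH2].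
  move=> [a [p0 [Ha [p0x yd]]]] w C q Hr HA Hq.
  case: Hwf => _ _ Hfin _ Hdl.
  have xfin : x != n_fin N.
    by apply/eqP => E; move: Ha; rewrite E Hfin inE.
  have [v Hv] := Hsound _ _ Hr.
  have [v1 [C2 [Hv1 He]]] := first_fire Hv Hq
    ltac:(rewrite ffunE => /set1_inj E; by rewrite E eqxx in xfin).
  have [C3 Hs] := step_exists He Ha.
  have Hr3 : run N (C_init N) (w ++ v1 ++ [:: (x, a)]) C3.
    apply/run_cat; exists C; split=> //; apply/run_cat; exists C2; split=> //=.
    by exists C3.
  exists (w ++ v1 ++ [:: (x, a)]), C3, p0; split=> //.
  - apply: after_step Hs; exact: after_run HA Hv1.
  - case: (Hdet x a p0 Ha p0x) => y' Ey'.
    case: Hs => _ _ ->; rewrite p0x Ey'.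
    by move: yd; rewrite Ey' inE => /eqP ->.
  - by have [_ ->] := Hdl x a p0 Ha p0x.
move=> w C q Hr HA Hq.
have [w' [C' [q' [Hr' HA' Hq' _]]]] := IH1 w C q Hr HA Hq.
exact: IH2 Hr' HA' Hq'.
Qed.

Lemma conc_nopath (P Nd R : finType) (N : negotiation P Nd R) m n :
  wf_negotiation N -> acyclic N -> deterministic N -> sound N ->
  concurrent N m n -> ~ clos_trans Nd (edge N) m n.
Proof.
move=> Hwf Hac Hdet Hsound [Hd [C0 [[w0 Hr0] [Hem Hen]]]] Hp.
have Hwf' := Hwf; case: Hwf' => Hne [_ Hdfin] Hfin Hout _.
have [pm pmd] := set0Pn _ (Hne m).
have nfin : n != n_fin N.
  apply/eqP => E; move: (disjointFr Hd pmd); by rewrite E Hdfin inE.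
have [b bo] := set0Pn _ (Hout n nfin).
have [C1 Hs] := step_exists Hen bo.
have HA : after N n C1.
  case: Hs => _ _ H p pn x; rewrite H pn => xd; apply: t_step; by exists b, p.
have HS : single C1.
  apply: single_step Hs => //; apply: single_run Hr0 => //; exact: single_init.
have Hq : C1 pm = [set m].
  have [z Ez] := HS pm.
  have : m \in C1 pm.
    case: Hs => _ _ ->; rewrite (disjointFr Hd pmd); exact: Hem.
  by rewrite Ez inE => /eqP <-.
have Hr1 : run N (C_init N) (w0 ++ [:: (n, b)]) C1.
  by apply/run_cat; exists C0; split=> //=; exists C1.
have [w' [C' [q' [_ HA' Hq' qd]]]] := path_lemma Hwf Hdet Hsound Hp Hr1 HA Hq.
apply: (Hac n); apply: (HA' q' qd n); by rewrite Hq' inE.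
Qed.

Lemma move_left (P Nd R : finType) (N : negotiation P Nd R) B x :
  (forall y, y \in B -> [disjoint dom N y.1 & dom N x.1]) ->
  equiv_runs N (B ++ [:: x]) (x :: B).
Proof.
case: x => x d.
elim: B => [|y B IH] H /=; first exact: rt_refl.
apply: (@rt_trans _ _ _ (y :: (x, d) :: B)).
  have := @equiv_cat _ _ _ N [:: y] (B ++ [:: (x, d)]) ((x, d) :: B) [::].
  rewrite !cats0 /=; apply; apply: IH => z zB; apply: H; by rewrite inE zB orbT.
apply: rt_step; case: y H => y c H.
exists [::], B, y, c, x, d; split=> //.
by have := H (y, c); rewrite inE eqxx => /(_ isT).
Qed.

Definition afterT (P Nd R : finType) (N : negotiation P Nd R) (m : Nd)
  (T : {set P}) (C : {ffun P -> {set Nd}}) :=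
  forall p, p \in T -> forall x, x \in C p -> clos_trans Nd (edge N) m x.

Lemma grow (P Nd R : finType) (N : negotiation P Nd R) m a C1 :
  afterT N m (dom N m) C1 ->
  forall v0 Ck, run N C1 v0 Ck ->
  exists I D (T : {set P}), [/\ equiv_runs N ((m, a) :: v0) (I ++ (m, a) :: D),
     dom N m \subset T, (forall y, y \in D -> dom N y.1 \subset T) &
     afterT N m T Ck].
Proof.
move=> H0 v0; elim/last_ind: v0 => [|v x IH] Ck /=.
  move=> <-; exists [::], [::], (dom N m); split=> //; exact: rt_refl.
rewrite -cats1 => /run_cat [Cv [Hv /= [Ck' [Hs Hck]]]]; subst Ck'.
have [I [D [T [HE HmT HDT HA]]]] := IH Cv Hv.
case: x Hs => x c Hs.
have HE1 : equiv_runs N ((m, a) :: v ++ [:: (x, c)]) ((I ++ (m, a) :: D) ++ [:: (x, c)]).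
  have := @equiv_cat _ _ _ N [::] ((m, a) :: v) (I ++ (m, a) :: D) [:: (x, c)].
  by rewrite /=; apply.
case: (pickP [pred p | (p \in dom N x) && (p \in T)]) => [p /andP [px pT] | Hno].
  exists I, (rcons D (x, c)), (T :|: dom N x); split.
  - by rewrite -!cats1; rewrite -catA in HE1.
  - apply: subset_trans HmT _; exact: subsetUl.
  - move=> y; rewrite mem_rcons inE => /orP [/eqP -> /=|yD]; first exact: subsetUr.
    apply: subset_trans (HDT y yD) _; exact: subsetUl.
  - case: Hs => He Hc Hck.
    have Hmx : clos_trans Nd (edge N) m x := HA p pT x (He p px).
    move=> q; rewrite inE => /orP [qT|qx] y; rewrite Hck.
      case: ifP => qx; last exact: HA.
      move=> yd; apply: t_trans Hmx _; apply: t_step; by exists c, q.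
    rewrite qx => yd; apply: t_trans Hmx _; apply: t_step; by exists c, q.
have Hdis : [disjoint dom N x & T].
  apply: disjI => p px pT; have := Hno p; by rewrite /= px pT.
exists (rcons I (x, c)), D, T; split=> //.
- apply: rt_trans HE1 _.
  rewrite -cats1 -catA -catA /=.
  have := @equiv_cat _ _ _ N I (((m, a) :: D) ++ [:: (x, c)]) ((x, c) :: (m, a) :: D) [::].
  rewrite !cats0 /=; apply.
  have := @move_left _ _ _ N ((m, a) :: D) (x, c); apply => y.
  rewrite inE => /orP [/eqP -> /=|yD].
    rewrite disjoint_sym; exact: disjointWr HmT Hdis.
  rewrite disjoint_sym; exact: disjointWr (HDT y yD) Hdis.
- case: Hs => He Hc Hck q qT y; rewrite Hck (disjointFl Hdis qT).
  exact: HA.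
Qed.

Lemma core (P Nd R : finType) (N : negotiation P Nd R) u m a v0 n b z C' :
  run N (C_init N) (u ++ (m, a) :: v0 ++ (n, b) :: z) C' ->
  ~ clos_trans Nd (edge N) m n ->
  exists w1 w2 C, equiv_runs N (u ++ (m, a) :: v0 ++ (n, b) :: z) (w1 ++ w2) /\
        run N (C_init N) w1 C /\ run N C w2 C' /\
        enabled N C m /\ enabled N C n.
Proof.
move=> Hr Hnp.
move/run_cat: (Hr) => [Cu [Hu /= [C1 [Hm Hrest]]]].
move/run_cat: Hrest => [Ck [Hv /= [Cn [Hn Hz]]]].
have H0 : afterT N m (dom N m) C1.
  case: Hm => _ Ha H p pm x; rewrite H pm => xd; apply: t_step; by exists a, p.
have [I [D [T [HE HmT HDT HA]]]] := grow a H0 Hv.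
have Hdis : [disjoint dom N n & T].
  apply: disjI => p pn pT; apply: Hnp; apply: (HA p pT n).
  by case: Hn => He _ _; exact: He.
have HE2 : equiv_runs N (u ++ (m, a) :: v0 ++ (n, b) :: z)
                        ((u ++ I) ++ ((m, a) :: D ++ (n, b) :: z)).
  have := @equiv_cat _ _ _ N u ((m, a) :: v0) (I ++ (m, a) :: D) ((n, b) :: z).
  by rewrite -!catA /=; apply.
have [C [Hw1 Hw2]] : exists C, run N (C_init N) (u ++ I) C /\
                      run N C ((m, a) :: D ++ (n, b) :: z) C'.
  by apply/run_cat; exact: equiv_run HE2 Hr.
exists (u ++ I), ((m, a) :: D ++ (n, b) :: z), C; split=> //; split=> //; split=> //.
split.
  by case: Hw2 => C2 [[He _ _] _].
move: Hw2; rewrite -cat_cons => /run_cat [Cx [Hx /= [Cy [[He _ _] _]]]].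
move=> p pn; have := He p pn.
rewrite (unchanged Hx) // => y; rewrite inE => /orP [/eqP -> /=|yD].
  apply/negP => pm; move: (disjointFr Hdis pn); by rewrite (subsetP HmT p pm).
apply/negP => py; move: (disjointFr Hdis pn); by rewrite (subsetP (HDT y yD) p py).
Qed.

Lemma contains_split (Nd R : eqType) (w : seq (Nd * R)) x :
  x \in [seq y.1 | y <- w] -> exists u a r, w = u ++ (x, a) :: r.
Proof.
elim: w => [|[y c] w IH] //=; rewrite inE => /orP [/eqP ->|/IH [u [a [r ->]]]].
  by exists [::], c, w.
by exists ((y, c) :: u), a, r.
Qed.

Lemma conc_sym (P Nd R : finType) (N : negotiation P Nd R) m n :
  concurrent N m n -> concurrent N n m.
Proof.
move=> [Hd [C [HC [Hm Hn]]]]; split; first by rewrite disjoint_sym.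
by exists C.
Qed.

Theorem lemma6p2 (Proc Node Res : finType) (N : negotiation Proc Node Res)
  (Hwf : wf_negotiation N) (Hacyc : acyclic N) (Hdet : deterministic N)
  (Hsound : sound N) (m n : Node) (Hmn : m <> n) :
  concurrent N m n <->
  ((exists w C', run N (C_init N) w C' /\ contains w m /\ contains w n) /\
   (forall w C', run N (C_init N) w C' -> contains w m -> contains w n ->
      exists w1 w2 C, equiv_runs N w (w1 ++ w2) /\
        run N (C_init N) w1 C /\ run N C w2 C' /\
        enabled N C m /\ enabled N C n)).
Proof.
split.
  move=> Hc; split.
    have Hc' := Hc; case: Hc' => Hd [C0 [[w0 Hr0] [Hem Hen]]].
    have Hwf' := Hwf; case: Hwf' => Hne [_ Hdfin] Hfin Hout _.
    have [pm pmd] := set0Pn _ (Hne m).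
    have [pn pnd] := set0Pn _ (Hne n).
    have nfin : n != n_fin N.
      apply/eqP => E; move: (disjointFr Hd pmd); by rewrite E Hdfin inE.
    have mfin : m != n_fin N.
      apply/eqP => E; move: (disjointFl Hd pnd); by rewrite E Hdfin inE.
    have [a ao] := set0Pn _ (Hout m mfin).
    have [b bo] := set0Pn _ (Hout n nfin).
    have [C1 Hs1] := step_exists Hem ao.
    have Hen1 : enabled N C1 n.
      move=> p pn'; case: Hs1 => _ _ ->; rewrite (disjointFl Hd pn'); exact: Hen.
    have [C2 Hs2] := step_exists Hen1 bo.
    exists (w0 ++ [:: (m, a); (n, b)]), C2; split.
      apply/run_cat; exists C0; split=> //=; exists C1; split=> //; by exists C2.
    by rewrite /contains map_cat !mem_cat !inE !eqxx !orbT.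
  move=> w C' Hr Hm Hn.
  have [u [a [r Ew]]] := contains_split Hm.
  move: Hn; rewrite /contains Ew map_cat mem_cat inE /=.
  have /negbTE -> : n != m by apply/eqP => E; apply: Hmn.
  rewrite /= => /orP [Hnu|Hnr].
    have [u' [b [v0 Eu]]] := contains_split Hnu.
    rewrite Ew Eu -catA /= in Hr *.
    have [w1 [w2 [C [H1 [H2 [H3 [H4 H5]]]]]]] :=
      core Hr (conc_nopath Hwf Hacyc Hdet Hsound (conc_sym Hc)).
    by exists w1, w2, C.
  have [v0 [b [z Er]]] := contains_split Hnr.
  rewrite Ew Er in Hr *.
  exact: core Hr (conc_nopath Hwf Hacyc Hdet Hsound Hc).
move=> [[w [C' [Hr [Hm Hn]]]] Hall].
have [w1 [w2 [C [_ [H1 [_ [Hem Hen]]]]]]] := Hall w C' Hr Hm Hn.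
split; last by exists C; split=> //; exists w1.
apply: disjI => p pm pn.
have [z Ez] := single_run Hdet (single_init N) H1 p.
have := Hem p pm; have := Hen p pn; rewrite Ez !inE => /eqP En /eqP Em.
by apply: Hmn; rewrite En Em.
Qed.
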